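(* Let $R$ be a ring and $I$ a nilpotent ideal of $R$. If $R/I$ is almost Armendariz, then $R$ is almost Armendariz.
   Context: All rings are associative with identity. For a ring $R$, $P(R)$ denotes the prime radical of $R$ (the intersection of all prime ideals of $R$, equivalently the set of strongly nilpotent elements of $R$). A ring $R$ is called almost Armendariz if whenever $f(x)=\sum_{i=0}^m a_ix^i$ and $g(x)=\sum_{j=0}^n b_jx^j\in R[x]$ satisfy $f(x)g(x)=0$, then $a_ib_j\in P(R)$ for all $0\le i\le m$, $0\le j\le n$. *)

(* Defs.v *)
From HB Require Import structures.
From mathcomp Require Import all_boot all_order all_algebra.
Set Implicit Arguments. Unset Strict Implicit. Unset Printing Implicit Defensive.
Import GRing.Theory.
Local Open Scope ring_scope.

Definition is_ideal (R : nzRingType) (I : R -> Prop) : Prop :=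
  [/\ I 0,
      (forall x y, I x -> I y -> I (x - y)),
      (forall r x, I x -> I (r * x)) &
      (forall r x, I x -> I (x * r))].

Definition is_prime_ideal (R : nzRingType) (P : R -> Prop) : Prop :=
  [/\ is_ideal P, ~ P 1 &
      (forall a b, (forall r, P (a * r * b)) -> P a \/ P b)].

Definition prime_radical (R : nzRingType) (x : R) : Prop :=
  forall P : R -> Prop, is_prime_ideal P -> P x.

Definition almost_armendariz (R : nzRingType) : Prop :=
  forall f g : {poly R}, f * g = 0 ->
    forall i j : nat, prime_radical (f`_i * g`_j).

(* Nilpotent ideal: I^n = 0 for some n, i.e. every product of n elements
   of I vanishes. *)
Definition nilpotent_ideal (R : nzRingType) (I : R -> Prop) : Prop :=
  exists n : nat, forall s : seq R, size s = n ->
    (forall k, (k < size s)%N -> I s`_k) -> \prod_(x <- s) x = 0.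

(* Main.v *)
Require Import Defs.
From HB Require Import structures.
From mathcomp Require Import all_boot all_order all_algebra.
From Stdlib Require Import Classical.
Import GRing.Theory.
Local Open Scope ring_scope.

Lemma nil_in_prime (R : nzRingType) (I P : R -> Prop) :
  is_ideal I -> nilpotent_ideal I -> is_prime_ideal P -> forall x, I x -> P x.
Proof.
move=> [I0 IB IL IR] [n Hn] [[P0 PB PL PR] P1 Pp] x Ix.
apply: NNPP => nPx.
have H : forall k, exists s : seq R, [/\ size s = k,
   (forall i, (i < size s)%N -> I s`_i) & ~ P (\prod_(y <- s) y)].
  elim=> [|k [s [Hs HI HP]]].
    by exists [::]; split => //; rewrite big_nil.
  have [r Hr] : exists r, ~ P (x * r * \prod_(y <- s) y).
    apply: NNPP => Hc.
    have: forall r, P (x * r * \prod_(y <- s) y).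
      by move=> r; apply: NNPP => Hr; apply: Hc; exists r.
    by move/Pp => [].
  exists (x * r :: s); split => //=; first by rewrite Hs.
    by case=> [|i] /=; [move=> _; apply: IR | apply: HI].
  by rewrite big_cons.
have [s [Hs HI HP]] := H n.
by apply: HP; rewrite (Hn s Hs HI).
Qed.

Theorem proposition2p6 (R S : nzRingType) (I : R -> Prop)
    (phi : {rmorphism R -> S}) :
  is_ideal I -> nilpotent_ideal I ->
  (forall y : S, exists x : R, phi x = y) ->
  (forall x : R, phi x = 0 <-> I x) ->
  almost_armendariz S -> almost_armendariz R.
Proof.
move=> HI Hnil Hsurj Hker HS f g fg0 i j P HP.
have IP := @nil_in_prime R I P HI Hnil HP.
case: HP => [[P0 PB PL PR] P1 Pp].
pose Q := fun y : S => exists x, phi x = y /\ P x.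
have QP : forall x, Q (phi x) -> P x.
  move=> x [z [Hz Pz]].
  have: I (x - z) by apply/Hker; rewrite rmorphB Hz subrr.
  move/IP => H.
  have := PB _ _ H (PB _ _ P0 Pz).
  by rewrite sub0r opprK subrK.
have HQ : is_prime_ideal Q.
  split.
  - split.
    + by exists 0; rewrite rmorph0.
    + move=> a b [x [<- Px]] [y [<- Py]].
      by exists (x - y); rewrite rmorphB; split => //; apply: PB.
    + move=> r a [x [<- Px]]; have [r' <-] := Hsurj r.
      by exists (r' * x); rewrite rmorphM; split => //; apply: PL.
    + move=> r a [x [<- Px]]; have [r' <-] := Hsurj r.
      by exists (x * r'); rewrite rmorphM; split => //; apply: PR.
  - by move=> H1; apply: P1; apply: QP; rewrite rmorph1.
  - move=> a b Hab.
    have [a' Ea] := Hsurj a; have [b' Eb] := Hsurj b.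
    have: forall r, P (a' * r * b').
      by move=> r; apply: QP; rewrite !rmorphM Ea Eb; apply: Hab.
    move/Pp => [Ha|Hb]; [left; exists a' | right; exists b']; by [].
have fg' : map_poly phi f * map_poly phi g = 0.
  by rewrite -rmorphM fg0 rmorph0.
have := HS _ _ fg' i j Q HQ.
rewrite !coef_map -rmorphM.
exact: QP.
Qed.
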